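(* Let $A=\{a_1,\ldots,a_n\}$ and $B=\{b_1,\ldots,b_m\}$ be finite point sets in $\mathbb{R}^2$ with $m\le n$. Let $t\in\mathbb{R}^2$ be such that $\|b_p+t-a_r\|\neq\|b_p+t-a_s\|$ for all $p\in\{1,\ldots,m\}$ and all $r\neq s$ in $\{1,\ldots,n\}$. Then every optimal matching for $t$ is an efficient matching for the set of preference lists $L=\{L_t(b_i)\mid i\in\{1,\ldots,m\}\}$.
   Context: A matching is an injective map $\pi:B\to A$; its cost at translation $t$ is $f(\pi,t)=\sum_{b\in B}\|b+t-\pi(b)\|^2$, and $\pi$ is optimal for $t$ if it minimizes $f(\cdot,t)$ over all injective maps. The preference list $L_t(b)$ of $b\in B$ is the list of the points of $A$ sorted by increasing distance from $b+t$. A matching $\pi$ is better than a distinct matching $\sigma$ if for each $b\in B$ either $\pi(b)=\sigma(b)$ or $\pi(b)$ appears before $\sigma(b)$ in $L_t(b)$. A matching is efficient (Pareto efficient) if no matching is better than it. *)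

(* Defs.v *)
From mathcomp Require Import all_boot all_order all_algebra.
Set Implicit Arguments. Unset Strict Implicit. Unset Printing Implicit Defensive.
Import Order.TTheory GRing.Theory Num.Theory.
Local Open Scope ring_scope.

Section Defs.
Variable R : rcfType.
Definition pt := (R * R)%type.
Definition addp (x y : pt) : pt := (x.1 + y.1, x.2 + y.2).
Definition subp (x y : pt) : pt := (x.1 - y.1, x.2 - y.2).
Definition sqnorm (x : pt) : R := x.1 ^+ 2 + x.2 ^+ 2.
Definition norm2 (x : pt) : R := Num.sqrt (sqnorm x).

Variables (n m : nat) (A : 'I_n -> pt) (B : 'I_m -> pt).

Definition matching (pi : 'I_m -> 'I_n) : Prop := injective pi.

Definition cost (pi : 'I_m -> 'I_n) (t : pt) : R :=
  \sum_(p < m) norm2 (subp (addp (B p) t) (A (pi p))) ^+ 2.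

Definition optimal (pi : 'I_m -> 'I_n) (t : pt) : Prop :=
  matching pi /\ forall sigma, matching sigma -> cost pi t <= cost sigma t.

Definition dist (t : pt) (p : 'I_m) (r : 'I_n) : R :=
  norm2 (subp (addp (B p) t) (A r)).

Definition pref_list (t : pt) (p : 'I_m) : seq 'I_n :=
  sort (fun r s => dist t p r <= dist t p s) (enum 'I_n).

Definition before (t : pt) (p : 'I_m) (r s : 'I_n) : bool :=
  (index r (pref_list t p) < index s (pref_list t p))%N.

Definition better (t : pt) (pi sigma : 'I_m -> 'I_n) : Prop :=
  matching pi /\ matching sigma /\ (exists p, pi p <> sigma p) /\
  forall p, pi p = sigma p \/ before t p (pi p) (sigma p).

Definition efficient (t : pt) (pi : 'I_m -> 'I_n) : Prop :=
  matching pi /\ ~ exists sigma, better t sigma pi.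
End Defs.

(* Main.v *)
Require Import Defs.
From mathcomp Require Import all_boot all_order all_algebra.
Import Order.TTheory GRing.Theory Num.Theory.
Local Open Scope ring_scope.

Lemma before_le (R : rcfType) (n m : nat) (A : 'I_n -> pt R) (B : 'I_m -> pt R)
  t p r s : before A B t p r s -> dist A B t p r <= dist A B t p s.
Proof.
rewrite /before => H.
set le := (fun r s : 'I_n => dist A B t p r <= dist A B t p s).
have tot : total le by move=> x y; rewrite /le le_total.
have tr : transitive le by move=> x y z; rewrite /le; apply: le_trans.
have so : sorted le (pref_list A B t p) by apply: sort_sorted.
have mem : forall x, x \in pref_list A B t p.
  by move=> x; rewrite mem_sort mem_enum.
have Hs : (index s (pref_list A B t p) < size (pref_list A B t p))%N.
  by rewrite index_mem.
have Hr : (index r (pref_list A B t p) < size (pref_list A B t p))%N.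
  by rewrite index_mem.
have := @sorted_ltn_nth _ le tr r _ so (index r (pref_list A B t p))
  (index s (pref_list A B t p)) Hr Hs H.
by rewrite !nth_index.
Qed.

Theorem lemma5 (R : rcfType) (n m : nat) (A : 'I_n -> pt R) (B : 'I_m -> pt R)
  (hA : injective A) (hB : injective B) (hmn : (m <= n)%N) (t : pt R)
  (hgen : forall (p : 'I_m) (r s : 'I_n), r != s -> dist A B t p r != dist A B t p s) :
  forall pi : 'I_m -> 'I_n, optimal A B pi t -> efficient A B t pi.
Proof.
move=> pi [mpi opt]; split => // -[sg [msg [_ [[p0 Hp0] Hall]]]].
have term : forall p, dist A B t p (sg p) ^+ 2 <= dist A B t p (pi p) ^+ 2.
  move=> p; case: (Hall p) => [->//|Hb].
  rewrite lerXn2r ?nnegrE ?sqrtr_ge0 //.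
  exact: before_le.
have strict : dist A B t p0 (sg p0) ^+ 2 < dist A B t p0 (pi p0) ^+ 2.
  case: (Hall p0) => [E|Hb]; first by rewrite E in Hp0.
  rewrite ltrXn2r ?nnegrE ?sqrtr_ge0 // lt_neqAle before_le // andbT.
  apply: hgen; apply/eqP; exact: Hp0.
have := opt sg msg; rewrite /cost.
rewrite (bigD1 p0) //= [X in _ <= X](bigD1 p0) //=.
move=> H; have : dist A B t p0 (pi p0) ^+ 2 + \sum_(i < m | i != p0) dist A B t i (pi i) ^+ 2
   <= dist A B t p0 (sg p0) ^+ 2 + \sum_(i < m | i != p0) dist A B t i (pi i) ^+ 2.
  apply: (le_trans H); rewrite lerD2l; apply: ler_sum => i _; exact: term.
by rewrite lerD2r leNgt strict.
Qed.
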